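(* Consider a network (as in the context) operated under a $w$-WMW policy, and let $C$ be its sensitivity constant, i.e., a constant such that for every arrival function $A$, every corresponding queue process $Q$, every $\lambda\succeq0$ and every fluid solution $q$ for $\lambda$ with $q(0)=Q(0)$, one has $\|Q(k)-q(k)\|_2\le C(1+\|\lambda\|+\max_{t<k}\|\sum_{\tau=0}^t(A(\tau)-\lambda)\|_2)$ for all $k\in\mathbb{Z}_+$. Fix an arrival function $A:\mathbb{Z}_+\to\mathbb{R}_+^n$ and $q_0\in\mathbb{R}_+^n$. For $r>0$ let $Q^r(\cdot)$ be the queue length process driven by $A(\cdot)$ with $Q^r(0)=rq_0$, and let $\hat q^r(t)=Q^r(\lfloor rt\rfloor)/r$ for $t\ge0$. Let $q(\cdot)$ be a fluid solution for some $\lambda\in\mathbb{R}_+^n$ with $q(0)=q_0$. Then for any $T>0$, $$\sup_{t\le T}\|\hat q^r(t)-q(t)\|_2\le \frac{C}{r}\max_{t<rT}\Big\|\sum_{\tau=0}^t\big(A(\tau)-\lambda\big)\Big\|_2+O(1/r),$$ where $O(1/r)$ denotes a term bounded by $K/r$ for a constant $K$ not depending on $r$.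
   Context: A network consists of $n$ queues, a routing matrix $R\in\mathbb{R}^{n\times n}$ with nonnegative entries, and a finite set $\mathcal{S}\subset\mathbb{R}_+^n$ of service vectors; standing assumption: for every $\mu\in\mathcal{S}$ and every $i$, the vector obtained from $\mu$ by setting its $i$-th entry to zero belongs to $\mathcal{S}$. A queue length process driven by $A:\mathbb{Z}_+\to\mathbb{R}_+^n$ evolves by $Q(t+1)=Q(t)+A(t)+(R-I)\min(\mu(t),Q(t))$ (componentwise min), where $\mu(t)\in\mathcal{S}$ is the chosen service vector. For $w\in\mathbb{R}_{++}^n$, $W=\mathrm{diag}(w)$, $\mathcal{S}_w(x)=\arg\max_{\mu\in\mathcal{S}}x^TW(I-R)\mu$; the $w$-WMW policy chooses $\mu(t)\in\mathcal{S}_w(Q(t))$ arbitrarily. A fluid solution for $\lambda\in\mathbb{R}_+^n$ (weights $w$) is an absolutely continuous $q:\mathbb{R}_+\to\mathbb{R}_+^n$ for which there exist $s_\mu:\mathbb{R}_+\to[0,1]$ ($\mu\in\mathcal{S}$) and $y:\mathbb{R}_+\to\mathbb{R}_+^n$ with, for a.e. $t$: $\dot q(t)=\lambda+(R-I)(\sum_\mu s_\mu(t)\mu-y(t))$, $\sum_\mu s_\mu(t)=1$, $y_i(t)\le\sum_\mu s_\mu(t)\mu_i$, $q_i(t)>0\Rightarrow y_i(t)=0$, and $\mu\notin\mathcal{S}_w(q(t))\Rightarrow s_\mu(t)=0$. *)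

(* Defs.v *)
From HB Require Import structures.
From mathcomp Require Import all_boot all_order all_algebra.
From mathcomp Require Import all_classical all_reals all_analysis.
Set Implicit Arguments. Unset Strict Implicit. Unset Printing Implicit Defensive.
Import Order.TTheory GRing.Theory Num.Theory.
Import numFieldNormedType.Exports.
Local Open Scope ring_scope.

Section Network.
Variables (R : realType) (n : nat).

Definition norm2 (v : 'cV[R]_n) : R := Num.sqrt (\sum_i v i 0 ^+ 2).

Definition nonneg (v : 'cV[R]_n) : Prop := forall i, 0 <= v i 0.
Definition minv (u v : 'cV[R]_n) : 'cV[R]_n := \col_i Num.min (u i 0) (v i 0).
Definition zero_at (mu : 'cV[R]_n) (i : 'I_n) : 'cV[R]_n :=
  \col_j (if j == i then 0 else mu j 0).

(* A network: routing matrix Rm >= 0 entrywise, finite set S of service vectors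
   (a duplicate-free list) contained in R_+^n and closed under zeroing entries. *)
Definition network (Rm : 'M[R]_n) (S : seq 'cV[R]_n) : Prop :=
  [/\ forall i j, 0 <= Rm i j,
      uniq S,
      forall mu, mu \in S -> nonneg mu &
      forall mu i, mu \in S -> zero_at mu i \in S].

Definition wscore (Rm : 'M[R]_n) (w x mu : 'cV[R]_n) : R :=
  (x^T *m diag_mx w^T *m (1%:M - Rm) *m mu) 0 0.

Definition in_Sw (Rm : 'M[R]_n) (S : seq 'cV[R]_n) (w x mu : 'cV[R]_n) : Prop :=
  mu \in S /\ forall nu, nu \in S -> wscore Rm w x nu <= wscore Rm w x mu.

Definition wmw_process (Rm : 'M[R]_n) (S : seq 'cV[R]_n) (w : 'cV[R]_n)
    (A Q : nat -> 'cV[R]_n) : Prop :=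
  nonneg (Q 0%N) /\
  exists mu : nat -> 'cV[R]_n, forall t : nat,
    in_Sw Rm S w (Q t) (mu t) /\
    Q t.+1 = Q t + A t + (Rm - 1%:M) *m minv (mu t) (Q t).

Definition abs_cont_on (f : R -> 'cV[R]_n) (a b : R) : Prop :=
  forall e : R, 0 < e -> exists2 d : R, 0 < d &
    forall (m : nat) (u v : nat -> R),
      (forall k, (k < m)%N -> a <= u k /\ u k <= v k /\ v k <= b) ->
      (forall k, (k.+1 < m)%N -> v k <= u k.+1) ->
      \sum_(k < m) (v k - u k) < d ->
      \sum_(k < m) norm2 (f (v k) - f (u k)) < e.

Definition abs_cont_Rplus (f : R -> 'cV[R]_n) : Prop :=
  forall b : R, 0 <= b -> abs_cont_on f 0 b.

(* Fluid solution for lambda (weights w).  Only the values of q on [0, +oo)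
   matter; the derivative condition is required at almost every t >= 0
   (w.r.t. Lebesgue measure), componentwise. *)
Definition fluid_solution (Rm : 'M[R]_n) (S : seq 'cV[R]_n) (w lam : 'cV[R]_n)
    (q : R -> 'cV[R]_n) : Prop :=
  abs_cont_Rplus q /\ (forall t, 0 <= t -> nonneg (q t)) /\
  exists (s : 'cV[R]_n -> R -> R) (y : R -> 'cV[R]_n),
    (forall mu t, 0 <= t -> 0 <= s mu t <= 1) /\
    (forall t, 0 <= t -> nonneg (y t)) /\
    {ae (@lebesgue_measure R), forall t : R, 0 <= t ->
       [/\ forall i : 'I_n,
             is_derive t (1 : R) (fun u => q u i 0)
               ((lam + (Rm - 1%:M) *m (\sum_(mu <- S) s mu t *: mu - y t)) i 0),
           \sum_(mu <- S) s mu t = 1,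
           forall i : 'I_n, y t i 0 <= (\sum_(mu <- S) s mu t *: mu) i 0,
           forall i : 'I_n, 0 < q t i 0 -> y t i 0 = 0 &
           forall mu, mu \in S -> ~ in_Sw Rm S w (q t) mu -> s mu t = 0]}.

(* max_{0 <= t < k} || sum_{tau=0}^t (A tau - lam) ||_2   (0 if k = 0) *)
Definition maxdev (A : nat -> 'cV[R]_n) (lam : 'cV[R]_n) (k : nat) : R :=
  \big[Num.max/0]_(t < k) norm2 (\sum_(tau < t.+1) (A tau - lam)).

Definition sensitivity_constant (Rm : 'M[R]_n) (S : seq 'cV[R]_n) (w : 'cV[R]_n)
    (C : R) : Prop :=
  forall (A Q : nat -> 'cV[R]_n) (lam : 'cV[R]_n) (q : R -> 'cV[R]_n),
    (forall t, nonneg (A t)) -> wmw_process Rm S w A Q ->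
    nonneg lam -> fluid_solution Rm S w lam q -> q 0 = Q 0%N ->
    forall k : nat,
      norm2 (Q k - q k%:R) <= C * (1 + norm2 lam + maxdev A lam k).

End Network.

(* Main.v *)
Require Import Defs.
From HB Require Import structures.
From mathcomp Require Import all_boot all_order all_algebra.
From mathcomp Require Import all_classical all_reals all_analysis.
From mathcomp Require Import measurable_realfun.
Set Implicit Arguments. Unset Strict Implicit. Unset Printing Implicit Defensive.
Import Order.TTheory GRing.Theory Num.Theory.
Import numFieldNormedType.Exports.
Local Open Scope ring_scope.
Local Open Scope classical_set_scope.
Local Open Scope ring_scope.
From mathcomp Require Import ring lra.
Section M.
Context {R : realType}.
Local Notation mu := (@lebesgue_measure R).

Lemma preimage_scale_null (c : R) (A : set R) : 0 < c -> measurable A ->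
  mu A = 0%E -> mu ((fun x => x * c) @^-1` A) = 0%E.
Proof.
move=> c0 mA A0.
have mf : measurable_fun [set: R] (fun x : R => x * c) by exact: mulrr_measurable.
unshelve epose (pf := (pushforward mu ((fun x : R => x * c) : R -> measurableTypeR R) : {measure set (measurableTypeR R) -> \bar R})).
  exact mf.
pose pf2 := (mscale (NngNum (ltW c0)) pf : {measure set (measurableTypeR R) -> \bar R}).
have key := @lebesgue_measure_unique R pf2.
have {}key : forall B, measurable B -> mu B = pf2 B.
  apply: key => /= _ [[a b]] _ <-.
  rewrite /pf2 /pf /mscale /pushforward /=.
  change (mu `]a, b]%classic = (c%:E * mu ((fun x : R => (x * c)%R) @^-1` `]a, b]%classic))%E).
  have -> : (fun x => x * c) @^-1` `]a, b]%classic = `](a / c), (b / c)]%classic.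
    apply/seteqP; split => x /=; rewrite !in_itv /=.
      by rewrite ltr_pdivrMr // ler_pdivlMr.
    by rewrite ltr_pdivrMr // ler_pdivlMr.
  rewrite !lebesgue_measure_itv /= !lte_fin ltr_pM2r ?invr_gt0//.
  case: ifP => _; last by rewrite mule0.
  rewrite -EFinD -EFinM; congr (_%:E); rewrite -mulrBl mulrCA mulfV ?gt_eqF// mulr1 //.
have := key A mA; rewrite A0 /pf2 /pf /mscale /pushforward /= => /esym/eqP.
rewrite mule_eq0 eqe gt_eqF //= => /eqP.
done.
Qed.

Lemma ae_scale (c : R) (P : R -> Prop) : 0 < c ->
  {ae mu, forall t, P t} -> {ae mu, forall t, P (t * c)}.
Proof.
move=> c0 [N [mN N0 sN]].
exists ((fun x => x * c) @^-1` N); split.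
- rewrite -[X in measurable X]setTI; apply: (@mulrr_measurable R setT c) => //.
- by have := @preimage_scale_null c N c0 mN N0.
- move=> x /= nP; exact: (sN (x * c) nP).
Qed.
End M.
Section Norm.
Context {R : realType} {n : nat}.
Implicit Types u v : 'cV[R]_n.

Lemma norm2_ge0 v : 0 <= norm2 v.
Proof. exact: sqrtr_ge0. Qed.

Lemma sumsq_ge0 v : 0 <= \sum_i v i 0 ^+ 2.
Proof. by apply: sumr_ge0 => i _; exact: sqr_ge0. Qed.

Lemma norm2N v : norm2 (- v) = norm2 v.
Proof. by rewrite /norm2; congr Num.sqrt; apply: eq_bigr => i _; rewrite mxE sqrrN. Qed.

Lemma norm2B u v : norm2 (u - v) = norm2 (v - u).
Proof. by rewrite -norm2N opprB. Qed.

Lemma norm2Z (c : R) v : 0 <= c -> norm2 (c *: v) = c * norm2 v.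
Proof.
move=> c0; rewrite /norm2.
have -> : \sum_i (c *: v) i 0 ^+ 2 = c ^+ 2 * \sum_i v i 0 ^+ 2.
  by rewrite mulr_sumr; apply: eq_bigr => i _; rewrite mxE exprMn.
by rewrite sqrtrM ?sqr_ge0 // sqrtr_sqr ger0_norm.
Qed.

Lemma cauchy_schwarz u v : \sum_i u i 0 * v i 0 <= norm2 u * norm2 v.
Proof.
set a := \sum_i u i 0 ^+ 2; set b := \sum_i u i 0 * v i 0; set c := \sum_i v i 0 ^+ 2.
have E x : 0 <= x ^+ 2 * a + 2 * x * b + c.
  have -> : x ^+ 2 * a + 2 * x * b + c = \sum_i (x * u i 0 + v i 0) ^+ 2.
    rewrite /a /b /c !mulr_sumr -!big_split /=; apply: eq_bigr => i _; ring.
  by apply: sumr_ge0 => i _; exact: sqr_ge0.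
have a0 : 0 <= a by exact: sumsq_ge0.
have c0 : 0 <= c by exact: sumsq_ge0.
have [b0|b0] := lerP b 0.
  by apply: le_trans b0 _; apply: mulr_ge0; exact: norm2_ge0.
have bb : b ^+ 2 <= a * c.
  have [a00|a00] := eqVneq a 0.
    have := E (- (c + 1) / (2 * b)); rewrite a00 mulr0 add0r.
    have -> : 2 * (- (c + 1) / (2 * b)) * b = - (c + 1).
      by field; rewrite gt_eqF.
    lra.
  have ap : 0 < a by rewrite lt_neqAle eq_sym a00.
  have := E (- b / a).
  have -> : (- b / a) ^+ 2 * a + 2 * (- b / a) * b + c = c - b ^+ 2 / a.
    by field; rewrite gt_eqF.
  rewrite subr_ge0 ler_pdivrMr // mulrC => h; exact: h.
rewrite /norm2 -/a -/c -sqrtrM //.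
rewrite -(ger0_norm (ltW b0)) -sqrtr_sqr.
by rewrite ler_sqrt // mulr_ge0.
Qed.

Lemma norm2_triangle u v : norm2 (u + v) <= norm2 u + norm2 v.
Proof.
have s : \sum_i (u + v) i 0 ^+ 2 = \sum_i u i 0 ^+ 2 + 2 * \sum_i u i 0 * v i 0 + \sum_i v i 0 ^+ 2.
  by rewrite mulr_sumr -!big_split; apply: eq_bigr => i _; rewrite mxE sqrrD -mulr_natl.
have cs := cauchy_schwarz u v.
have hu : norm2 u ^+ 2 = \sum_i u i 0 ^+ 2 by rewrite sqr_sqrtr // sumsq_ge0.
have hv : norm2 v ^+ 2 = \sum_i v i 0 ^+ 2 by rewrite sqr_sqrtr // sumsq_ge0.
rewrite {1}/norm2 s -(ger0_norm (addr_ge0 (norm2_ge0 u) (norm2_ge0 v))) -sqrtr_sqr.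
rewrite ler_sqrt; last exact: sqr_ge0.
rewrite -hu -hv; nra.
Qed.

Lemma norm2_l1 v : norm2 v <= \sum_i `|v i 0|.
Proof.
have s0 : 0 <= \sum_i `|v i 0| by apply: sumr_ge0 => i _; exact: normr_ge0.
rewrite /norm2 -(ger0_norm s0) -sqrtr_sqr ler_sqrt; last exact: sqr_ge0.
rewrite expr2 mulr_suml; apply: ler_sum => i _.
rewrite -real_normK ?num_real // expr2; apply: ler_wpM2l => //.
by rewrite (bigD1 i) //= lerDl; apply: sumr_ge0 => j _; exact: normr_ge0.
Qed.

End Norm.
Lemma deriv_scale {R : realType} (f : R -> R) (r t D : R) : 0 < r ->
  is_derive (t / r) 1 f D -> is_derive t 1 (fun u => r * f (u / r)) D.
Proof.
move=> r0 [fd fD].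
pose g : R -> R := fun u => r^-1 *: u.
have gd : forall u, is_derive u (1:R) g (r^-1 *: 1).
  move=> u; exact: is_deriveZ.
have dg : differentiable g t.
  apply/derivable1_diffP. exact: (@ex_derive _ _ _ _ _ _ _ (gd t)).
have gt : g t = t / r by rewrite /g /= mulrC.
have df : differentiable f (g t) by rewrite gt; apply/derivable1_diffP.
have dh : differentiable (f \o g) t by exact: differentiable_comp.
have hd : derivable (f \o g) t 1 by apply/derivable1_diffP.
have hv : 'D_1 (f \o g) t = D * r^-1.
  rewrite -derive1E derive1_comp; last first.
    - by apply/derivable1_diffP.
    - by apply/derivable1_diffP.
  rewrite !derive1E gt fD (@derive_val _ _ _ _ _ _ _ (gd t)) /=.
  by change (D * (r^-1 * 1) = D / r); rewrite mulr1.
have : is_derive t 1 (r \*: (f \o g)) (r *: (D * r^-1)).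
  apply: is_deriveZ; exact: (DeriveDef hd hv).
have -> : r *: (D * r^-1) = D.
  by change (r * (D * r^-1) = D); rewrite mulrCA mulfV ?gt_eqF // mulr1.
suff -> : (fun u : R => r * f (u / r)) = r \*: (f \o g) by [].
by apply/funext => u; rewrite /= /g /= [u / r]mulrC.
Qed.

Lemma ae_mono {R : realType} (P Q : R -> Prop) :
  {ae (@lebesgue_measure R), forall t, P t} -> (forall t, P t -> Q t) ->
  {ae (@lebesgue_measure R), forall t, Q t}.
Proof.
move=> [N [mN N0 sN]] PQ; exists N; split => // x /= nQ; apply: sN => /= Px.
by apply: nQ; apply: PQ.
Qed.

Section Fluid.
Context {R : realType} {n : nat} (Rm : 'M[R]_n) (S : seq 'cV[R]_n) (w : 'cV[R]_n).

Lemma wscoreZ (c : R) x mu : wscore Rm w (c *: x) mu = c * wscore Rm w x mu.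
Proof. by rewrite /wscore linearZ /= -!scalemxAl mxE. Qed.

Lemma in_SwZ (c : R) x mu : 0 < c -> in_Sw Rm S w x mu -> in_Sw Rm S w (c *: x) mu.
Proof.
move=> c0 [muS h]; split => // nu nuS; rewrite !wscoreZ ler_pM2l //; exact: h.
Qed.

Lemma fluid_scale lam q (r : R) : 0 < r -> fluid_solution Rm S w lam q ->
  fluid_solution Rm S w lam (fun u => r *: q (u / r)).
Proof.
move=> r0 [ac [qnn [s [y [sb [ynn ae]]]]]].
have rV0 : 0 < r^-1 by rewrite invr_gt0.
split; [|split].
- move=> b b0 e e0.
  have [d d0 H] := ac (b / r) (divr_ge0 b0 (ltW r0)) (e / r) (divr_gt0 e0 r0).
  exists (d * r); first exact: mulr_gt0.
  move=> m u v huv hvu hs.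
  have lesc : forall x z, (x / r <= z / r) = (x <= z) by move=> x z; rewrite ler_pM2r.
  have h : \sum_(k < m) norm2 (q (v k / r) - q (u k / r)) < e / r.
    apply: (H m (fun k => u k / r) (fun k => v k / r)).
    + move=> k km; have [h1 [h2 h3]] := huv k km.
      by rewrite !lesc h2 h3 divr_ge0 // ltW.
    + by move=> k km; rewrite lesc; apply: hvu.
    + under eq_bigr do rewrite -mulrBl.
      by rewrite -mulr_suml ltr_pdivrMr.
  under eq_bigr do rewrite -scalerBr norm2Z ?(ltW r0) //.
  rewrite -mulr_sumr -ltr_pdivlMl // mulrC; exact: h.
- move=> t t0 i; rewrite mxE; apply: mulr_ge0; first exact: ltW.
  by apply: qnn; apply: divr_ge0 => //; exact: ltW.
exists (fun mu t => s mu (t / r)), (fun t => y (t / r)); split; [|split].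
- by move=> mu t t0; apply: sb; apply: divr_ge0 => //; exact: ltW.
- by move=> t t0; apply: ynn; apply: divr_ge0 => //; exact: ltW.
apply: (ae_mono (ae_scale rV0 ae)) => t Pt t0.
have t0' : 0 <= t * r^-1 by apply: divr_ge0 => //; exact: ltW.
have [hd hs1 hy hpos hsw] := Pt t0'.
split => //.
- move=> i.
  have -> : (fun u => (r *: q (u / r)) i 0) = (fun u => r * q (u / r) i 0).
    by apply/funext => u; rewrite mxE.
  exact: deriv_scale.
- by move=> i; rewrite mxE pmulr_rgt0 //; apply: hpos.
- move=> mu muS nSw; apply: hsw => // Sw; apply: nSw; exact: in_SwZ.
Qed.

End Fluid.

Section Proc.
Context {R : realType} {n : nat} (Rm : 'M[R]_n) (S : seq 'cV[R]_n) (w : 'cV[R]_n).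

Lemma step_comp (Q A m : 'cV[R]_n) i :
  (Q + A + (Rm - 1%:M) *m m) i 0 = Q i 0 + A i 0 + ((\sum_j Rm i j * m j 0) - m i 0).
Proof. by rewrite mulmxBl mul1mx !mxE. Qed.

Lemma minv_bounds (mu Q : 'cV[R]_n) i : 0 <= mu i 0 -> 0 <= Q i 0 ->
  [/\ 0 <= minv mu Q i 0, minv mu Q i 0 <= mu i 0 & minv mu Q i 0 <= Q i 0].
Proof.
move=> h1 h2; rewrite mxE; split.
- by rewrite le_min h1 h2.
- by rewrite ge_min lexx.
- by rewrite ge_min lexx orbT.
Qed.

Lemma proc_nonneg A Q : network Rm S -> (forall t, nonneg (A t)) ->
  wmw_process Rm S w A Q -> forall t, nonneg (Q t).
Proof.
move=> [Rnn _ Snn _] Ann [Q0 [mu H]]; elim => [//|t IH] i.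
have [[muS _] ->] := H t.
rewrite step_comp.
have [m0 m1 m2] := minv_bounds (Snn _ muS i) (IH i).
have s0 : 0 <= \sum_j Rm i j * minv (mu t) (Q t) j 0.
  apply: sumr_ge0 => j _; apply: mulr_ge0 => //.
  by have [] := minv_bounds (Snn _ muS j) (IH j).
have := Ann t i; lra.
Qed.

Definition M0 := \sum_(nu <- S) \sum_j nu j 0.
Definition B1 := \sum_(i < n) (\sum_(j < n) Rm i j * M0 + M0).

Lemma mu_le_M0 mu j : network Rm S -> mu \in S -> mu j 0 <= M0.
Proof.
move=> [_ uS Snn _] muS; rewrite /M0 (bigD1_seq mu) //=.
apply: le_trans (_ : \sum_j0 mu j0 0 <= _).
  rewrite (bigD1 j) //= lerDl; apply: sumr_ge0 => k _; exact: Snn.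
rewrite lerDl big_seq_cond; apply: sumr_ge0 => nu /andP[nuS _]; apply: sumr_ge0 => k _; exact: Snn.
Qed.

Lemma incr_bound A Q : network Rm S -> (forall t, nonneg (A t)) ->
  wmw_process Rm S w A Q -> forall t, norm2 (Q t.+1 - Q t) <= norm2 (A t) + B1.
Proof.
move=> net Ann P t.
have Qnn := proc_nonneg net Ann P.
move: net P => [Rnn uS Snn Sz] [Q0 [mu H]].
have [[muS _] ->] := H t.
have -> : forall X Y Z : 'cV[R]_n, X + Y + Z - X = Y + Z by move=> X Y Z; by rewrite addrC !addrA addNr add0r.
apply: le_trans (norm2_triangle _ _) _; rewrite lerD2l.
apply: le_trans (norm2_l1 _) _; apply: ler_sum => i _.
rewrite mulmxBl mul1mx !mxE.
apply: le_trans (ler_normB _ _) _.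
have [m0 m1 m2] := minv_bounds (Snn _ muS i) (Qnn t i).
apply: lerD.
- rewrite ger0_norm; last first.
    apply: sumr_ge0 => j _; apply: mulr_ge0 => //.
    by have [] := minv_bounds (Snn _ muS j) (Qnn t j).
  apply: ler_sum => j _; apply: ler_wpM2l => //.
  have [_ h _] := minv_bounds (Snn _ muS j) (Qnn t j).
  apply: le_trans h _; apply: mu_le_M0 => //.
- rewrite ger0_norm; last by rewrite le_min (Snn _ muS i) (Qnn t i).
  apply: (@le_trans _ _ (mu t i 0)); [by rewrite ge_min lexx | exact: mu_le_M0].
Qed.

Lemma B1_ge0 : network Rm S -> 0 <= B1.
Proof.
move=> [Rnn _ Snn _].
have M00 : 0 <= M0 by rewrite /M0 big_seq; apply: sumr_ge0 => nu nuS; apply: sumr_ge0 => j _; exact: Snn.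
apply: sumr_ge0 => i _; apply: addr_ge0 => //; apply: sumr_ge0 => j _; exact: mulr_ge0.
Qed.

End Proc.

Lemma incr_k {R : realType} {n : nat} (Q : nat -> 'cV[R]_n) (B : R) :
  (forall t, norm2 (Q t.+1 - Q t) <= B) ->
  forall k d, norm2 (Q (k + d)%N - Q k) <= B * d%:R.
Proof.
move=> h k; elim => [|d IH].
  by rewrite addn0 subrr mulr0 /norm2 big1 ?sqrtr0 // => i _; rewrite mxE expr0n.
have -> : Q (k + d.+1)%N - Q k = (Q (k + d).+1 - Q (k + d)%N) + (Q (k + d)%N - Q k).
  by rewrite addnS addrA subrK.
apply: le_trans (norm2_triangle _ _) _.
by rewrite -natr1 mulrDr mulr1 addrC lerD.
Qed.

Lemma argmax_seq {T : eqType} {R : realType} (f : T -> R) (s : seq T) :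
  s != [::] -> exists2 mu, mu \in s & forall nu, nu \in s -> f nu <= f mu.
Proof.
elim: s => [//|a s IH] _.
case: s IH => [|b s] IH.
  by exists a; [rewrite mem_head | move=> nu; rewrite inE => /eqP ->].
have [m mS mmax] := IH isT.
case: (lerP (f a) (f m)) => h.
  exists m; first by rewrite inE mS orbT.
  by move=> nu; rewrite inE => /orP[/eqP ->|]; [|apply: mmax].
exists a; first exact: mem_head.
move=> nu; rewrite inE => /orP[/eqP ->//|/mmax h2]; exact: le_trans h2 (ltW h).
Qed.

Lemma exists_proc {R : realType} {n : nat} (Rm : 'M[R]_n) (S : seq 'cV[R]_n) (w : 'cV[R]_n)
  (lam Q0 : 'cV[R]_n) : S != [::] -> nonneg Q0 ->
  exists Q, wmw_process Rm S w (fun _ => lam) Q /\ Q 0%N = Q0.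
Proof.
move=> Sn Q0nn.
have : forall x, exists mu, in_Sw Rm S w x mu.
  move=> x; have [mu muS h] := argmax_seq (wscore Rm w x) Sn.
  by exists mu; split.
move=> /choice [f hf].
pose Qc := fix Qc t := if t is t'.+1 then Qc t' + lam + (Rm - 1%:M) *m minv (f (Qc t')) (Qc t') else Q0.
exists Qc; split => //; split => //.
by exists (fun t => f (Qc t)) => t; split.
Qed.

Lemma norm2_0 {R : realType} {n : nat} : norm2 (0 : 'cV[R]_n) = 0.
Proof. by rewrite /norm2 big1 ?sqrtr0 // => i _; rewrite mxE expr0n. Qed.

Lemma norm2_dist {R : realType} {n : nat} (u v z : 'cV[R]_n) :
  norm2 (u - z) <= norm2 (u - v) + norm2 (v - z).
Proof.
have -> : u - z = (u - v) + (v - z) by rewrite addrA subrK.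
exact: norm2_triangle.
Qed.

Lemma maxdev_const {R : realType} {n : nat} (lam : 'cV[R]_n) k :
  maxdev (fun _ => lam) lam k = 0.
Proof.
rewrite /maxdev; elim/big_ind: _ => //.
- by move=> x y -> ->; rewrite maxxx.
- by move=> t _; rewrite big1 ?norm2_0 // => tau _; rewrite subrr.
Qed.

Lemma maxdev_ge0 {R : realType} {n : nat} (A : nat -> 'cV[R]_n) lam k :
  0 <= maxdev A lam k.
Proof.
rewrite /maxdev; elim/big_ind: _ => //.
- by move=> x y x0 y0; rewrite le_max x0.
- by move=> i _; exact: norm2_ge0.
Qed.

Lemma bigmax_ge {R : realType} (k : nat) (f : nat -> R) t : (t < k)%N ->
  f t <= \big[Num.max/0]_(i < k) f i.
Proof.
elim: k f t => [//|k IH] f t tk.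
rewrite big_ord_recl /=; case: t tk => [|t] tk; first by rewrite le_max lexx.
have := IH (fun i => f i.+1) t tk => /= h.
by rewrite le_max h orbT.
Qed.

Lemma maxdev_mono {R : realType} {n : nat} (A : nat -> 'cV[R]_n) lam k k' :
  (k <= k')%N -> maxdev A lam k <= maxdev A lam k'.
Proof.
move=> kk; rewrite {1}/maxdev; elim/big_ind: _ => //.
- exact: maxdev_ge0.
- by move=> x y x0 y0; rewrite ge_max x0.
- move=> t _; apply: (bigmax_ge (fun t => norm2 (\sum_(tau < t.+1) (A tau - lam)))).
  exact: leq_trans (ltn_ord t) kk.
Qed.

Lemma fluid_lip {R : realType} {n : nat} (Rm : 'M[R]_n) (S : seq 'cV[R]_n)
    (w : 'cV[R]_n) (C : R) (lam : 'cV[R]_n) (q : R -> 'cV[R]_n) :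
  network Rm S -> S != [::] -> sensitivity_constant Rm S w C -> nonneg lam ->
  fluid_solution Rm S w lam q ->
  forall a b : R, 0 <= a -> a <= b ->
    norm2 (q a - q b) <= (norm2 lam + B1 Rm S) * (b - a).
Proof.
move=> net Sn sens lamnn fl.
have [ac [qnn _]] := fl.
set L := norm2 lam + B1 Rm S.
have L0 : 0 <= L by apply: addr_ge0; [exact: norm2_ge0 | exact: B1_ge0].
move=> a b a0 ab.
have b0 : 0 <= b := le_trans a0 ab.
apply/ler_addgt0Pr => e e0.
pose eps := e / 3.
have eps0 : 0 < eps by rewrite divr_gt0.
have b10 : 0 <= b + 1 by rewrite addr_ge0.
have [dl dl0 Hac] := ac (b + 1) b10 eps eps0.
have cont : forall x z, 0 <= x -> x <= z -> z <= b + 1 -> z - x < dl ->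
    norm2 (q z - q x) < eps.
  move=> x z x0 xz zb zx.
  have h := Hac 1%N (fun _ => x) (fun _ => z).
  rewrite !big_ord1 in h; apply: h => //.
pose D0 := C * (1 + norm2 lam).
pose r := (`|2 * D0| + L + 1) / eps + dl^-1 + 1.
have dlV0 : 0 < dl^-1 by rewrite invr_gt0.
have c0 : 0 <= (`|2 * D0| + L + 1) / eps.
  by apply: divr_ge0; [have := normr_ge0 (2 * D0); lra | exact: ltW].
have r0 : 0 < r by rewrite /r; lra.
have rV : r^-1 < dl.
  rewrite invf_plt ?posrE //; rewrite /r; lra.
have rD : (2 * D0 + L) / r <= eps.
  rewrite ler_pdivrMr // /r !mulrDr [eps * (_ / eps)]mulrCA mulfV ?gt_eqF // mulr1.
  have : 2 * D0 <= `|2 * D0| by exact: ler_norm.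
  have : 0 <= eps * dl^-1 by apply: mulr_ge0; exact: ltW.
  lra.
have q0nn : nonneg (r *: q 0) by move=> i; rewrite mxE mulr_ge0 ?(ltW r0) ?qnn.
have [Qc [Pc Qc0]] := exists_proc Rm w lam Sn q0nn.
have fl' := fluid_scale r0 fl.
have F := sens (fun _ => lam) Qc lam _ (fun _ => lamnn) Pc lamnn fl'.
rewrite mul0r Qc0 in F; have {}F := F erefl.
have F1 : forall k : nat, norm2 (r^-1 *: Qc k - q (k%:R / r)) <= D0 / r.
  move=> k; have := F k; rewrite maxdev_const addr0 -/D0 => h.
  have -> : r^-1 *: Qc k - q (k%:R / r) = r^-1 *: (Qc k - r *: q (k%:R / r)).
    by rewrite scalerBr scalerA mulVf ?gt_eqF // scale1r.
  rewrite norm2Z ?invr_ge0 ?(ltW r0) // mulrC ler_wpM2r // invr_ge0 ltW //.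
have F2 : forall k d, norm2 (Qc (k + d)%N - Qc k) <= L * d%:R.
  apply: incr_k => t.
  by have := incr_bound net (fun _ => lamnn) Pc t.
pose ka := Num.truncn (r * a); pose kb := Num.truncn (r * b).
have ra0 : 0 <= r * a by rewrite mulr_ge0 // ltW.
have rb0 : 0 <= r * b by rewrite mulr_ge0 // ltW.
have kab : (ka <= kb)%N by apply: le_truncn; rewrite ler_pM2l.
have /andP[ka1 ka2] := truncn_itv ra0.
have /andP[kb1 kb2] := truncn_itv rb0.
rewrite -/ka in ka1 ka2; rewrite -/kb in kb1 kb2.
rewrite -natr1 in ka2; rewrite -natr1 in kb2.
pose X := ka%:R / r; pose Y := kb%:R / r.
have X1 : X <= a by rewrite /X ler_pdivrMr // mulrC.
have X2 : a < X + r^-1.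
  have -> : ka%:R / r + r^-1 = (ka%:R + 1) / r by rewrite mulrDl mul1r.
  by rewrite ltr_pdivlMr // mulrC.
have Y1 : Y <= b by rewrite /Y ler_pdivrMr // mulrC.
have Y2 : b < Y + r^-1.
  have -> : kb%:R / r + r^-1 = (kb%:R + 1) / r by rewrite mulrDl mul1r.
  by rewrite ltr_pdivlMr // mulrC.
have X0 : 0 <= X by rewrite /X divr_ge0 // ltW.
have Y0 : 0 <= Y by rewrite /Y divr_ge0 // ltW.
have ca : norm2 (q a - q X) < eps by apply: cont => //; lra.
have cb : norm2 (q Y - q b) < eps.
  by rewrite norm2B; apply: cont => //; lra.
have fa := F1 ka; have fb := F1 kb.
have fab : norm2 (r^-1 *: Qc ka - r^-1 *: Qc kb) <= L * (Y - X).
  rewrite norm2B -scalerBr norm2Z ?invr_ge0 ?(ltW r0) //.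
  have := F2 ka (kb - ka)%N; rewrite subnKC // natrB // => h.
  rewrite /Y /X -mulrBl mulrCA.
  have -> : (kb%:R - ka%:R) * (L / r) = r^-1 * (L * (kb%:R - ka%:R)) by ring.
  apply: ler_wpM2l => //; rewrite invr_ge0 ltW //.
have LYX : L * (Y - X) <= L * (b - a) + L * r^-1.
  rewrite -mulrDr; apply: ler_wpM2l => //; lra.
have LD : 2 * (D0 / r) + L * r^-1 <= eps.
  by move: rD; rewrite mulrDl mulrA.
have n1 := norm2_dist (q a) (q X) (q b).
have n2 := norm2_dist (q X) (r^-1 *: Qc ka) (q b).
have n3 := norm2_dist (r^-1 *: Qc ka) (r^-1 *: Qc kb) (q b).
have n4 := norm2_dist (r^-1 *: Qc kb) (q Y) (q b).
rewrite norm2B in fa.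
have e3 : e = 3 * eps by rewrite /eps mulrC -mulrA mulVf // mulr1.
rewrite e3; lra.
Qed.

Theorem corollary1 (R : realType) (n : nat) (Rm : 'M[R]_n) (S : seq 'cV[R]_n)
    (w : 'cV[R]_n) (C : R) :
  network Rm S -> (forall i, 0 < w i 0) ->
  sensitivity_constant Rm S w C ->
  forall (A : nat -> 'cV[R]_n) (q0 lam : 'cV[R]_n) (q : R -> 'cV[R]_n),
    (forall t, nonneg (A t)) -> nonneg q0 -> nonneg lam ->
    fluid_solution Rm S w lam q -> q 0 = q0 ->
  forall T : R, 0 < T ->
  exists K : R, forall (r : R) (Qr : nat -> 'cV[R]_n),
    0 < r -> wmw_process Rm S w A Qr -> Qr 0%N = r *: q0 ->
    forall t : R, 0 <= t <= T ->
      norm2 (r^-1 *: Qr (Num.truncn (r * t)) - q t)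
        <= C / r * maxdev A lam `|Num.ceil (r * T)|%N + K / r.
Proof.
move=> net wpos sens A q0 lam q Ann q0nn lamnn fl q00 T T0.
have [S0|Sn] := eqVneq S [::].
  exists 0 => r Qr r0 [_ [mu H]].
  by have [[] ] := H 0%N; rewrite S0.
pose L := norm2 lam + B1 Rm S.
exists (C * (1 + norm2 lam) + L) => r Qr r0 P Qr0 t /andP[t0 tT].
have fl' := fluid_scale r0 fl.
have F := sens A Qr lam _ Ann P lamnn fl'.
rewrite mul0r Qr0 q00 in F; have {}F := F erefl.
pose k := Num.truncn (r * t).
have rt0 : 0 <= r * t by rewrite mulr_ge0 // ltW.
have /andP[k1 k2] := truncn_itv rt0.
rewrite -/k in k1 k2.
have Fk := F k.
have md0 := maxdev_ge0 A lam k.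
have P0 : 0 < 1 + norm2 lam + maxdev A lam k.
  have := norm2_ge0 lam; lra.
have C0 : 0 <= C.
  have := norm2_ge0 (Qr k - r *: q (k%:R / r)); nra.
pose Kc := `|Num.ceil (r * T)|%N.
have kKc : (k <= Kc)%N.
  have rT : r * t <= r * T by rewrite ler_pM2l.
  have c1 := ceil_ge (r * T).
  have c0 : (0 <= Num.ceil (r * T))%R.
    rewrite ceil_ge0; have : 0 <= r * T by rewrite mulr_ge0 // ltW.
    lra.
  have : (k%:R : R) <= Kc%:R.
    rewrite /Kc natr_absz ger0_norm //; lra.
  by rewrite ler_nat.
have mdm := maxdev_mono A lam kKc.
have F1 : norm2 (r^-1 *: Qr k - q (k%:R / r))
    <= C / r * (1 + norm2 lam) + C / r * maxdev A lam Kc.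
  have -> : r^-1 *: Qr k - q (k%:R / r) = r^-1 *: (Qr k - r *: q (k%:R / r)).
    by rewrite scalerBr scalerA mulVf ?gt_eqF // scale1r.
  rewrite norm2Z ?invr_ge0 ?(ltW r0) //.
  apply: le_trans (_ : r^-1 * (C * (1 + norm2 lam + maxdev A lam Kc)) <= _).
    apply: ler_wpM2l; first by rewrite invr_ge0 ltW.
    apply: le_trans Fk _; apply: ler_wpM2l => //; lra.
  rewrite mulrDr mulrDr !mulrA [r^-1 * C]mulrC.
  by rewrite mulrDr.
have kr0 : 0 <= k%:R / r by rewrite divr_ge0 // ltW.
have krt : k%:R / r <= t by rewrite ler_pdivrMr // mulrC.
have Lip := fluid_lip net Sn sens lamnn fl kr0 krt.
have tk : t - k%:R / r <= r^-1.
  rewrite lerBlDr.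
  have -> : r^-1 + k%:R / r = (k%:R + 1) / r by rewrite mulrDl mul1r addrC.
  rewrite ler_pdivlMr // mulrC; lra.
have L0 : 0 <= L by apply: addr_ge0; [exact: norm2_ge0 | exact: B1_ge0].
have Lt : L * (t - k%:R / r) <= L * r^-1 by apply: ler_wpM2l.
have nd := norm2_dist (r^-1 *: Qr k) (q (k%:R / r)) (q t).
rewrite -/L in Lip.
have -> : (C * (1 + norm2 lam) + L) / r = C / r * (1 + norm2 lam) + L * r^-1.
  by rewrite mulrDl mulrAC.
rewrite -/k -/Kc; lra.
Qed.
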